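(* Let $n,p\ge1$ be integers and $0<\sigma\le B$. If $A\le B$, then \[ A+\frac{(\ln 2)^2}{4\sqrt2}\,\frac Bn\big(f(A)-f(B)\big)\;\le\;\int_0^Bp^{\mathrm{Benn}}(t)\,dt\;\le\;A+\frac Bn\big(f(A)-f(B)\big). \] If $A>B$, then $\int_0^Bp^{\mathrm{Benn}}(t)\,dt=B$. In general, \[ (A\wedge B)+\frac{(\ln 2)^2}{4\sqrt2}\,\frac Bn\big(f(A\wedge B)-f(B)\big)\;\le\;\int_0^Bp^{\mathrm{Benn}}(t)\,dt\;\le\;(A\wedge B)+\frac Bn\big(f(A\wedge B)-f(B)\big). \]
   Context: Let $\Psi(x)=(1+x)\ln(1+x)-x$ for $x\ge0$ (a bijection of $[0,\infty)$ onto itself) and $\Psi^{-1}$ its inverse. Define $q^{\mathrm{Benn}}(t)=2p\exp\!\big(-\frac{n\sigma^2}{B^2}\Psi(\frac{tB}{\sigma^2})\big)$ and $p^{\mathrm{Benn}}(t)=\min\{1,q^{\mathrm{Benn}}(t)\}$ for $t\ge0$, and \[ A=\frac{\sigma^2}{B}\Psi^{-1}\Big(\frac{B^2\ln(2p)}{n\sigma^2}\Big),\qquad f(t)=\frac{q^{\mathrm{Benn}}(t)}{\ln(1+tB/\sigma^2)},\ t>0. \] *)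

(* Defs.v *)
From Stdlib Require Import Reals Lra Epsilon.
From Coquelicot Require Import Coquelicot.
Open Scope R_scope.

Definition Psi (x : R) : R := (1 + x) * ln (1 + x) - x.

(* Psi^{-1}: the (unique, since Psi is a bijection of [0,oo)) y >= 0 with Psi y = x. *)
Definition Psi_inv (x : R) : R :=
  epsilon (inhabits 0) (fun y => 0 <= y /\ Psi y = x).

Definition qBenn (n p : nat) (sigma B t : R) : R :=
  2 * INR p * exp (- (INR n * sigma ^ 2 / B ^ 2) * Psi (t * B / sigma ^ 2)).

Definition pBenn (n p : nat) (sigma B t : R) : R := Rmin 1 (qBenn n p sigma B t).

Definition A_Benn (n p : nat) (sigma B : R) : R :=
  sigma ^ 2 / B * Psi_inv (B ^ 2 * ln (2 * INR p) / (INR n * sigma ^ 2)).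

Definition f_Benn (n p : nat) (sigma B t : R) : R :=
  qBenn n p sigma B t / ln (1 + t * B / sigma ^ 2).

(* Main.v *)
Require Import Defs.
From Stdlib Require Import Reals.
From Coquelicot Require Import Coquelicot.
From Stdlib Require Import Lra Psatz Epsilon Ranalysis5.
Open Scope R_scope.

Lemma ln_le_sub1 z : 0 < z -> ln z <= z - 1.
Proof. intros Hz. generalize (exp_ineq1_le (ln z)). rewrite exp_ln; lra. Qed.

Lemma Psi_mono x1 x2 : 0 <= x1 -> x1 <= x2 -> Psi x1 <= Psi x2.
Proof.
  intros H1 H2. unfold Psi.
  set (a := 1 + x1). set (b := 1 + x2).
  assert (Ha : 1 <= a) by (unfold a; lra).
  assert (Hb : a <= b) by (unfold a, b; lra).
  assert (Hla : 0 <= ln a) by (rewrite <- ln_1; apply ln_le; lra).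
  assert (Hd : ln (a / b) <= a / b - 1) by (apply ln_le_sub1; apply Rdiv_lt_0_compat; lra).
  rewrite ln_div in Hd by lra.
  assert (Hd2 : b * (ln b - ln a) >= b - a).
  { assert (b * (ln a - ln b) <= b * (a / b - 1)) by (apply Rmult_le_compat_l; lra).
    replace (b * (a / b - 1)) with (a - b) in H by (field; lra). lra. }
  replace x2 with (b - 1) by (unfold b; ring). replace x1 with (a - 1) by (unfold a; ring).
  nra.
Qed.

Lemma Psi_le x : 0 <= x -> Psi x <= (1 + x) * ln (1 + x) ^ 2.
Proof.
  intros Hx. unfold Psi.
  assert (Hy0 : 0 <= ln (1 + x)) by (rewrite <- ln_1; apply ln_le; lra).
  assert (Hyx : ln (1 + x) <= x) by (generalize (ln_le_sub1 (1 + x)); lra).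
  set (y := ln (1 + x)) in *.
  destruct (Rle_lt_dec y 1).
  - assert (0 <= (x-y)*(1-y)) by (apply Rmult_le_pos; lra).
    assert (0 <= x*y^2) by (apply Rmult_le_pos; nra). nra.
  - assert (0 <= (1+x)*y*(y-1)) by (apply Rmult_le_pos; [apply Rmult_le_pos|]; lra). nra.
Qed.

Lemma Psi_0 : Psi 0 = 0.
Proof. unfold Psi. rewrite Rplus_0_r, ln_1. ring. Qed.

Lemma Psi_inv_spec v : 0 <= v -> 0 <= Psi_inv v /\ Psi (Psi_inv v) = v.
Proof.
  intros Hv. unfold Psi_inv. apply epsilon_spec.
  destruct (Req_dec v 0) as [->|Hv0].
  - exists 0. split; [lra| apply Psi_0].
  - set (M := exp (v + 1) - 1).
    assert (HM : 0 < M).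
    { unfold M. generalize (exp_ineq1_le (v + 1)). lra. }
    assert (HPM : Psi M - v > 0).
    { unfold Psi. replace (1 + M) with (exp (v + 1)) by (unfold M; ring).
      rewrite ln_exp. unfold M.
      generalize (exp_ineq1_le (v + 1)). nra. }
    destruct (IVT_interv (fun x => Psi x - v) 0 M) as [z [Hz1 Hz2]].
    + intros a Ha. apply continuity_pt_filterlim.
      apply (ex_derive_continuous (fun x => Psi x - v)). unfold Psi. auto_derive. lra.
    + exact HM.
    + rewrite Psi_0. lra.
    + lra.
    + exists z. split; lra.
Qed.

Section S0.
Variables (n p : nat) (sigma B : R).
Hypotheses (Hn : (1 <= n)%nat) (Hp : (1 <= p)%nat) (Hs : 0 < sigma) (HsB : sigma <= B).

Lemma deriv_F t : 0 <= t ->  0 < ln (1 + t * B / sigma ^ 2) ->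
  is_derive (fun t => - (B / INR n * f_Benn n p sigma B t)) t
   (qBenn n p sigma B t + B / INR n * qBenn n p sigma B t * (B / sigma ^ 2) /
      ((1 + t * B / sigma ^ 2) * ln (1 + t * B / sigma ^ 2) ^ 2)).
Proof.
  intros Ht HL.
  assert (HB : 0 < B) by lra.
  assert (HnR : 1 <= INR n) by (apply (le_INR 1); exact Hn).
  assert (Hx : 0 < 1 + t * B / sigma ^ 2).
  { assert (0 <= t * B / sigma ^ 2) by (apply Rmult_le_pos; [nra| apply Rlt_le, Rinv_0_lt_compat; nra]). lra. }
  assert (Hs2 : 0 < sigma ^ 2) by nra.
  unfold f_Benn, qBenn, Psi.
  remember (sigma ^ 2) as s2. remember (B ^ 2) as b2.
  auto_derive.
  - unfold Rdiv in *. rewrite ?Rmult_1_l. repeat split; try lra.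
  - unfold Rdiv in *. rewrite ?Rmult_1_l. unfold Rminus.
    set (L := ln (1 + t * B * / s2)) in *. set (E := exp _).
    subst s2 b2. assert (0 < sigma ^ 2 + t * B) by nra. field. repeat split; lra.
Qed.
End S0.

Lemma exp_le a b : a <= b -> exp a <= exp b.
Proof. intros H. destruct (Rle_lt_or_eq_dec _ _ H) as [H'|H']; [apply Rlt_le, exp_increasing; lra| rewrite H'; lra]. Qed.

Section S.
Variables (n p : nat) (sigma B : R).
Hypotheses (Hn : (1 <= n)%nat) (Hp : (1 <= p)%nat) (Hs : 0 < sigma) (HsB : sigma <= B).

Let q t := qBenn n p sigma B t.
Let v := B ^ 2 * ln (2 * INR p) / (INR n * sigma ^ 2).
Let lam := INR n * sigma ^ 2 / B ^ 2.
Let y := Psi_inv v.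
Let A := A_Benn n p sigma B.

Lemma HB : 0 < B. Proof. lra. Qed.
Lemma HnR : 1 <= INR n. Proof. apply (le_INR 1); exact Hn. Qed.
Lemma HpR : 1 <= INR p. Proof. apply (le_INR 1); exact Hp. Qed.
Lemma Hs2 : 0 < sigma ^ 2. Proof. nra. Qed.
Lemma Hln2 : / 2 < ln 2. Proof. exact ln_lt_2. Qed.
Lemma Hl2p : ln 2 <= ln (2 * INR p).
Proof. apply ln_le; generalize HpR; lra. Qed.
Lemma Hv : 0 < v.
Proof.
  unfold v. generalize HB HnR Hs2 Hl2p Hln2; intros. apply Rdiv_lt_0_compat; [|nra].
  apply Rmult_lt_0_compat; nra.
Qed.
Lemma Hlamv : lam * v = ln (2 * INR p).
Proof. unfold lam, v. generalize HB HnR Hs2; intros. field. lra. Qed.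
Lemma Hlam : 0 < lam.
Proof. unfold lam. generalize HB HnR Hs2; intros. apply Rdiv_lt_0_compat; nra. Qed.
Lemma Hy : 0 < y /\ Psi y = v.
Proof.
  destruct (Psi_inv_spec v) as [H1 H2]. generalize Hv; lra.
  split; [|exact H2]. destruct (Rle_lt_or_eq_dec _ _ H1) as [H|H]; [exact H|].
  exfalso. fold y in H, H2. rewrite <- H, Psi_0 in H2. generalize Hv; lra.
Qed.
Lemma HAy : A = sigma ^ 2 / B * y.
Proof. reflexivity. Qed.
Lemma HApos : 0 < A.
Proof. rewrite HAy. generalize Hy HB Hs2; intros. apply Rmult_lt_0_compat; [apply Rdiv_lt_0_compat|]; tauto. Qed.

Lemma x_le t t' : t <= t' -> t * B / sigma ^ 2 <= t' * B / sigma ^ 2.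
Proof.
  intros H. generalize HB Hs2; intros. unfold Rdiv.
  apply Rmult_le_compat_r; [apply Rlt_le, Rinv_0_lt_compat; lra|]. nra.
Qed.
Lemma HAx : A * B / sigma ^ 2 = y.
Proof. rewrite HAy. generalize HB Hs2; intros. field. lra. Qed.

Lemma q_ge1 t : 0 <= t <= A -> 1 <= q t.
Proof.
  intros [H0 H1]. unfold q, qBenn. fold lam.
  assert (Hx0 : 0 <= t * B / sigma ^ 2) by (generalize (x_le 0 t H0); unfold Rdiv; lra).
  assert (Hxy := x_le t A H1). rewrite HAx in Hxy.
  assert (HP := Psi_mono _ _ Hx0 Hxy).
  destruct Hy as [_ Hyv]. rewrite Hyv in HP.
  assert (HlP : lam * Psi (t * B / sigma ^ 2) <= ln (2 * INR p)).
  { rewrite <- Hlamv. apply Rmult_le_compat_l; [generalize Hlam; lra| exact HP]. }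
  assert (He : exp (- ln (2 * INR p)) <= exp (- lam * Psi (t * B / sigma ^ 2))).
  { apply exp_le. lra. }
  rewrite exp_Ropp, exp_ln in He by (generalize HpR; lra).
  generalize HpR; intros.
  apply Rmult_le_compat_l with (r := 2 * INR p) in He; [|lra].
  rewrite Rinv_r in He; lra.
Qed.

Lemma q_le1 t : A <= t -> q t <= 1 /\ ln 2 <= lam * Psi (t * B / sigma ^ 2).
Proof.
  intros H1. unfold q, qBenn. fold lam.
  assert (Hxy := x_le A t H1). rewrite HAx in Hxy.
  destruct Hy as [Hy0 Hyv].
  assert (HP := Psi_mono _ _ (Rlt_le _ _ Hy0) Hxy). rewrite Hyv in HP.
  assert (HlP : ln (2 * INR p) <= lam * Psi (t * B / sigma ^ 2)).
  { rewrite <- Hlamv. apply Rmult_le_compat_l; [generalize Hlam; lra| exact HP]. }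
  split; [|generalize Hl2p; lra].
  assert (He : exp (- lam * Psi (t * B / sigma ^ 2)) <= exp (- ln (2 * INR p))).
  { apply exp_le. lra. }
  rewrite exp_Ropp, exp_ln in He by (generalize HpR; lra).
  generalize HpR; intros.
  apply Rmult_le_compat_l with (r := 2 * INR p) in He; [|lra].
  rewrite Rinv_r in He; lra.
Qed.


Let r t := B / INR n * q t * (B / sigma ^ 2) / ((1 + t * B / sigma ^ 2) * ln (1 + t * B / sigma ^ 2) ^ 2).
Let c := (ln 2) ^ 2 / (4 * sqrt 2).

Lemma x_pos t : A <= t -> 0 < t * B / sigma ^ 2.
Proof. intros H. generalize (x_le A t H). rewrite HAx. generalize Hy; lra. Qed.

Lemma L_pos t : A <= t -> 0 < ln (1 + t * B / sigma ^ 2).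
Proof. intros H. rewrite <- ln_1. apply ln_increasing; generalize (x_pos t H); lra. Qed.

Lemma q_pos t : 0 < q t.
Proof. unfold q, qBenn. generalize HpR (exp_pos (- (INR n * sigma ^ 2 / B ^ 2) * Psi (t * B / sigma ^ 2))); nra. Qed.

Lemma c_bounds : 0 <= c <= / 4.
Proof.
  unfold c. assert (H1 : 1 <= sqrt 2) by (rewrite <- sqrt_1; apply sqrt_le_1_alt; lra).
  assert (H2 : ln 2 <= 1) by (generalize (ln_le_sub1 2); lra).
  generalize Hln2; intros. split.
  - apply Rmult_le_pos; [nra| apply Rlt_le, Rinv_0_lt_compat; lra].
  - unfold Rdiv. apply Rmult_le_reg_l with (r := 4 * sqrt 2); [lra|].
    rewrite (Rmult_comm (ln 2 ^ 2)), <- Rmult_assoc, Rinv_r by lra. nra.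
Qed.

Lemma pointwise t : A <= t -> 0 <= r t /\ c * (q t + r t) <= q t.
Proof.
  intros H. generalize (x_pos t H) (L_pos t H) (q_pos t) (q_le1 t H) c_bounds HB Hs2 HnR Hln2 Hlam.
  set (x := t * B / sigma ^ 2). fold (q t). intros Hx HL Hq [_ HlP] [Hc0 Hc1] ? ? ? ? ?.
  assert (HPs := Psi_le x (Rlt_le _ _ Hx)).
  set (L := ln (1 + x)) in *.
  assert (Hr : r t = q t / (lam * ((1 + x) * L ^ 2))).
  { unfold r. fold x. fold L. unfold lam. field. repeat split; try lra; nra. }
  assert (Hk : ln 2 <= lam * ((1 + x) * L ^ 2)).
  { apply Rle_trans with (1 := HlP). apply Rmult_le_compat_l; lra. }
  assert (Hr0 : 0 <= r t).
  { rewrite Hr. apply Rmult_le_pos; [lra| apply Rlt_le, Rinv_0_lt_compat; lra]. }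
  assert (Hrl : r t * (lam * ((1 + x) * L ^ 2)) = q t).
  { rewrite Hr. field. lra. }
  split; [exact Hr0|]. nra.
Qed.

Lemma cont_q t : 0 <= t -> continuous q t.
Proof.
  intros Ht. apply (ex_derive_continuous q). unfold q, qBenn, Psi.
  generalize (x_le 0 t Ht) HB Hs2. unfold Rdiv. rewrite !Rmult_0_l. intros.
  remember (sigma ^ 2) as s2. remember (B ^ 2) as b2.
  auto_derive. repeat split; lra.
Qed.

Lemma cont_qr t : A <= t -> continuous (fun t => q t + r t) t.
Proof.
  intros Ht. generalize (x_pos t Ht) (L_pos t Ht). intros.
  apply (ex_derive_continuous (fun t => q t + r t)). unfold r, q, qBenn, Psi.
  remember (sigma ^ 2) as s2. remember (B ^ 2) as b2.
  auto_derive. subst s2 b2. unfold Rdiv in *.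
  set (L := ln (1 + t * B * / sigma ^ 2)) in *.
  assert (0 < (1 + t * B * / sigma ^ 2) * (L * (L * 1))).
  { apply Rmult_lt_0_compat; [lra|]. rewrite Rmult_1_r. nra. }
  repeat split; lra.
Qed.


Let f := f_Benn n p sigma B.
Let I := RInt (pBenn n p sigma B) 0 B.

Lemma pB_one t : 0 <= t <= A -> pBenn n p sigma B t = 1.
Proof. intros H. unfold pBenn. apply Rmin_left. exact (q_ge1 t H). Qed.
Lemma pB_q t : A <= t -> pBenn n p sigma B t = q t.
Proof. intros H. unfold pBenn. apply Rmin_right. apply (q_le1 t H). Qed.

Lemma RInt_one a b : RInt (fun _ => 1) a b = b - a.
Proof. rewrite RInt_const. unfold scal; simpl. unfold mult; simpl. ring. Qed.

Lemma case_gt : A > B -> I = B.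
Proof.
  intros H. unfold I. rewrite (RInt_ext _ (fun _ => 1)).
  - rewrite RInt_one. change (B - 0 = B). ring.
  - intros x. rewrite Rmin_left, Rmax_right by (generalize HB; lra). intros Hx.
    apply pB_one. lra.
Qed.

Lemma case_le : A <= B ->
  A + c * (B / INR n) * (f A - f B) <= I /\ I <= A + (B / INR n) * (f A - f B).
Proof.
  intros HAB. generalize HApos; intro HA0.
  assert (HexA : ex_RInt (pBenn n p sigma B) 0 A).
  { apply (ex_RInt_ext (fun _ => 1)); [|apply ex_RInt_const].
    intros x. rewrite Rmin_left, Rmax_right by lra. intros Hx. symmetry. apply pB_one. lra. }
  assert (Hqc : ex_RInt q A B).
  { apply (@ex_RInt_continuous R_CompleteNormedModule). intros z. rewrite Rmin_left, Rmax_right by lra. intros Hz.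
    apply cont_q. lra. }
  assert (HexB : ex_RInt (pBenn n p sigma B) A B).
  { apply (ex_RInt_ext q); [|exact Hqc].
    intros x. rewrite Rmin_left, Rmax_right by lra. intros Hx. symmetry. apply pB_q. lra. }
  assert (HI : I = A + RInt q A B).
  { unfold I. rewrite <- (RInt_Chasles _ 0 A B HexA HexB). change plus with Rplus. simpl.
    rewrite (RInt_ext _ (fun _ => 1) 0 A), RInt_one.
    - rewrite (RInt_ext _ q A B). ring.
      intros x. rewrite Rmin_left, Rmax_right by lra. intros Hx. apply pB_q. lra.
    - intros x. rewrite Rmin_left, Rmax_right by lra. intros Hx. apply pB_one. lra. }
  assert (HF : is_RInt (fun t => q t + r t) A B ((B / INR n) * (f A - f B))).
  { assert (H := is_RInt_derive (fun t => - (B / INR n * f_Benn n p sigma B t)) (fun t => q t + r t) A B).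
    replace ((B / INR n) * (f A - f B)) with
      (minus (- (B / INR n * f_Benn n p sigma B B)) (- (B / INR n * f_Benn n p sigma B A))).
    2:{ unfold minus, plus, opp; simpl. unfold f. ring. }
    apply H.
    - intros x. rewrite Rmin_left, Rmax_right by lra. intros Hx.
      apply deriv_F; [exact Hn| exact Hs| exact HsB| lra| apply L_pos; lra].
    - intros x. rewrite Rmin_left, Rmax_right by lra. intros Hx. apply cont_qr. lra. }
  assert (Hup : RInt q A B <= (B / INR n) * (f A - f B)).
  { rewrite <- (is_RInt_unique _ _ _ _ HF). apply RInt_le; [exact HAB| exact Hqc| eexists; exact HF|].
    intros x Hx. generalize (pointwise x ltac:(lra)). lra. }
  assert (Hlo : c * (B / INR n) * (f A - f B) <= RInt q A B).
  { assert (HF2 : is_RInt (fun t => c * (q t + r t)) A B (c * ((B / INR n) * (f A - f B))))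
      by exact (is_RInt_scal _ _ _ c _ HF).
    rewrite Rmult_assoc, <- (is_RInt_unique _ _ _ _ HF2).
    apply RInt_le; [exact HAB| eexists; exact HF2| exact Hqc|].
    intros x Hx. generalize (pointwise x ltac:(lra)). lra. }
  rewrite HI. split; lra.
Qed.

Lemma final :
  (A <= B ->
     A + c * (B / INR n) * (f A - f B) <= I /\ I <= A + (B / INR n) * (f A - f B)) /\ (A > B -> I = B) /\ (Rmin A B + c * (B / INR n) * (f (Rmin A B) - f B) <= I /\ I <= Rmin A B + (B / INR n) * (f (Rmin A B) - f B)).
Proof.
  split; [exact case_le|]. split; [exact case_gt|].
  destruct (Rle_lt_dec A B) as [H|H].
  - rewrite Rmin_left by exact H. apply case_le, H.
  - rewrite Rmin_right by lra. rewrite case_gt by lra. split; ring_simplify; lra.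
Qed.

End S.

Theorem theorem3p1 (n p : nat) (sigma B : R) :
  (1 <= n)%nat -> (1 <= p)%nat -> 0 < sigma -> sigma <= B ->
  let A := A_Benn n p sigma B in
  let f := f_Benn n p sigma B in
  let I := RInt (pBenn n p sigma B) 0 B in
  let c := (ln 2) ^ 2 / (4 * sqrt 2) in
  (A <= B ->
     A + c * (B / INR n) * (f A - f B) <= I /\
     I <= A + (B / INR n) * (f A - f B)) /\
  (A > B -> I = B) /\
  (Rmin A B + c * (B / INR n) * (f (Rmin A B) - f B) <= I /\
   I <= Rmin A B + (B / INR n) * (f (Rmin A B) - f B)).
Proof. intros Hn Hp Hs HsB. exact (final n p sigma B Hn Hp Hs HsB). Qed.
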